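(* Let $a=\{a_1,\dots,a_m\}$ be a set of positive integers and $n\ge 0$. There exist a function $P:\mathbb{Z}_{\ge 0}\to\mathbb{Q}$ and an integer $N$ such that for every $s\ge1$ and all integers $k_1,\dots,k_s\ge N$, the number of $n$-element independent sets of the disjoint union $\overline{F}(a,k_1)+\overline{F}(a,k_2)+\cdots+\overline{F}(a,k_s)$ equals $P(k_1+\cdots+k_s)$. In other words, this number depends only on $a$, $n$ and $\sum_ik_i$.
   Context: For a set $a=\{a_1,\dots,a_m\}$ of positive integers and a positive integer $k$, $F(a,k)$ is the simple graph with vertex set $\mathbb{Z}/k\mathbb{Z}$ in which distinct vertices $i,j$ are adjacent if and only if $i-j\equiv a_r\pmod k$ or $j-i\equiv a_r\pmod k$ for some $1\le r\le m$. $\overline{F}(a,k)$ is the graph obtained from $F(a,k)$ by adding $k$ new vertices $v'$, one for each vertex $v$ of $F(a,k)$, with a single new edge joining $v'$ to $v$ (so each new vertex has degree $1$). $G_1+\cdots+G_s$ denotes the disjoint union of graphs. An independent set is a set of vertices no two of which are adjacent. *)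

(* Defs.v *)
From mathcomp Require Import all_boot all_order all_algebra.
Set Implicit Arguments. Unset Strict Implicit. Unset Printing Implicit Defensive.

Definition F_adj (a : seq nat) (k : nat) (i j : nat) : bool :=
  (i != j) &&
  has (fun r => ((i + k - j) %% k == r %% k) || ((j + k - i) %% k == r %% k)) a.

(* Adjacency in Fbar(a,k): vertex (v,false) is the original vertex v of F(a,k),
   vertex (v,true) is the new pendant vertex v' joined only to v. *)
Definition Fbar_adj (a : seq nat) (k : nat) (u v : nat * bool) : bool :=
  match u.2, v.2 with
  | false, false => F_adj a k u.1 v.1
  | true, false | false, true => u.1 == v.1
  | true, true => false
  end.

Definition union_vtx (s : nat) (k : 'I_s -> nat) : finType :=
  {i : 'I_s & ('I_(k i) * bool)%type}.

Definition union_adj (a : seq nat) (s : nat) (k : 'I_s -> nat)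
  (x y : union_vtx k) : bool :=
  (tag x == tag y) &&
  Fbar_adj a (k (tag x)) (val (tagged x).1, (tagged x).2)
                         (val (tagged y).1, (tagged y).2).

Definition independent (a : seq nat) (s : nat) (k : 'I_s -> nat)
  (S : {set union_vtx k}) : bool :=
  [forall x in S, forall y in S, ~~ union_adj a x y].

Definition num_indep (a : seq nat) (n s : nat) (k : 'I_s -> nat) : nat :=
  #|[set S : {set union_vtx k} | independent a S && (#|S| == n)]|.

(* Main.v *)
Require Import Defs.
From mathcomp Require Import all_boot all_order all_algebra.
From mathcomp Require Import zify.
Set Implicit Arguments. Unset Strict Implicit. Unset Printing Implicit Defensive.
Import GRing.Theory Num.Theory.

Lemma dvdz_eqE (K u v w : int) : (K %| w)%Z -> (u - v)%R = w -> (K %| u)%Z = (K %| v)%Z.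
Proof.
move=> hw e; apply/idP/idP => h.
  have : (K %| (u - w)%R)%Z by rewrite rpredB.
  by rewrite (_ : (u - w = v)%R) //; lia.
have : (K %| (v + w)%R)%Z by rewrite rpredD.
by rewrite (_ : (v + w = u)%R) //; lia.
Qed.

Lemma dvdz_eqN (K u v : int) : (u + v)%R = 0%R -> (K %| u)%Z = (K %| v)%Z.
Proof. by move=> e; rewrite (_ : v = (- u)%R) ?rpredN //; lia. Qed.

Lemma dvdz_small (K : nat) (u : int) : (`|u| < K)%N -> (K%:Z %| u)%Z -> u = 0%R.
Proof.
move=> hu; rewrite dvdzE /=; case: (eqVneq `|u|%N 0%N) => [/eqP | nz].
  by rewrite absz_eq0 => /eqP.
move/dvdn_leq; rewrite lt0n nz => /(_ isT) h; lia.
Qed.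

Lemma small_dvd (K z q : nat) : (z < K)%N -> (q < K)%N ->
  (K%:Z %| (z%:Z - q%:Z)%R)%Z = (z == q).
Proof.
move=> hz hq; apply/idP/eqP => [h | ->]; last by rewrite subrr dvdz0.
have := dvdz_small _ h; lia.
Qed.

Lemma modeq (x y d K : nat) : (x < K)%N -> (y < K)%N -> (d < K)%N ->
  ((x + K - y) %% K == d %% K)%N = (K%:Z %| (x%:Z - y%:Z - d%:Z)%R)%Z.
Proof.
move=> hx hy hd; rewrite -eqz_nat -!modz_nat -/(_ == _ %[mod _])%Z eqz_mod_dvd.
apply: (dvdz_eqE (w := K%:Z)); first exact: dvdzz.
lia.
Qed.

Section Graph.
Variables (T : finType) (e : rel T).
Hypothesis irr : forall x, ~~ e x x.

Definition ind (S : {set T}) := [forall x in S, forall y in S, ~~ e x y].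
Definition avoid (S X : {set T}) := [forall x in S, x \notin X].
Definition Qg n (X : {set T}) :=
  #|[set S : {set T} | ind S && (#|S| == n) && avoid S X]|.
Definition Nb v := [set y | e v y || e y v].

Lemma indP (S : {set T}) : reflect (forall x y, x \in S -> y \in S -> ~~ e x y) (ind S).
Proof.
apply: (iffP forallP) => [H x y xS yS | H x].
  by have /implyP/(_ xS)/forallP/(_ y)/implyP/(_ yS) := H x.
by apply/implyP => xS; apply/forallP => y; apply/implyP => yS; apply: H.
Qed.

Lemma avoidP (S X : {set T}) : reflect (forall x, x \in S -> x \notin X) (avoid S X).
Proof.
apply: (iffP forallP) => [H x xS | H x].
  by have /implyP/(_ xS) := H x.
by apply/implyP => xS; apply: H.
Qed.

Lemma Qg0 (X : {set T}) : Qg 0 X = 1%N.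
Proof.
rewrite /Qg -(cards1 (set0 : {set T})); apply: eq_card => S.
rewrite !inE; apply/idP/idP.
  by case/andP => /andP [_ /eqP/cards0_eq ->].
move/eqP ->; rewrite cards0 eqxx andbT; apply/andP; split.
  by apply/indP => x y; rewrite inE.
by apply/avoidP => x; rewrite inE.
Qed.

Lemma Qg_mem n (X : {set T}) v : v \notin X ->
  #|[set S : {set T} | ind S && (#|S| == n.+1) && avoid S X && (v \in S)]|
  = Qg n (v |: (X :|: Nb v)).
Proof.
move=> vX; rewrite /Qg.
set B := [set S : {set T} | _ && _ && avoid S (v |: (X :|: Nb v))].
have inj : {in B &, injective (fun S => v |: S)}.
  move=> S1 S2; rewrite !inE => /andP [_ /avoidP a1] /andP [_ /avoidP a2] E.
  apply/setP => x; have := congr1 (fun S : {set T} => x \in S) E; rewrite /= !inE.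
  case: (eqVneq x v) => [-> | //] _.
  apply/idP/idP => [/a1 | /a2]; by rewrite !inE eqxx.
rewrite -(card_in_imset inj); apply: eq_card => S; rewrite inE.
apply/idP/imsetP.
  case/andP => /andP [/andP [/indP iS /eqP cS] /avoidP aS] vS.
  exists (S :\ v); last by rewrite setD1K.
  rewrite inE; apply/andP; split; first (apply/andP; split).
  - by apply/indP => x y; rewrite !inE => /andP [_ xS] /andP [_ yS]; apply: iS.
  - by move: cS; rewrite (cardsD1 v S) vS add1n => -[->].
  apply/avoidP => x; rewrite !inE => /andP [xv xS]; rewrite negb_or xv /=.
  rewrite negb_or (aS x xS) /=; apply/negP => /orP [] E.
    by have := iS v x vS xS; rewrite E.
  by have := iS x v xS vS; rewrite E.
case=> S'; rewrite inE => /andP [/andP [/indP iS /eqP cS] /avoidP aS] ->.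
have vS' : v \notin S' by apply/negP => /aS; rewrite !inE eqxx.
rewrite setU11 andbT; apply/andP; split; first (apply/andP; split).
- apply/indP => x y; rewrite !inE => /orP [/eqP -> | xS] /orP [/eqP -> | yS].
  + exact: irr.
  + by have := aS y yS; rewrite !inE !negb_or => /and3P [_ _ /andP []].
  + by have := aS x xS; rewrite !inE !negb_or => /and3P [_ _ /andP []].
  + exact: iS.
- by rewrite cardsU1 vS' cS.
apply/avoidP => x; rewrite !inE => /orP [/eqP -> // | xS].
by have := aS x xS; rewrite !inE !negb_or => /and3P [].
Qed.

Lemma Qg_split n (X : {set T}) v : v \notin X ->
  Qg n.+1 X = (Qg n.+1 (v |: X) + Qg n (v |: (X :|: Nb v)))%N.
Proof.
move=> vX; rewrite -Qg_mem // /Qg.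
set A := [set S : {set T} | ind S && (#|S| == n.+1) && avoid S X].
rewrite -(cardsID [set S : {set T} | v \in S] A) addnC; congr (_ + _)%N;
  apply: eq_card => S; rewrite !inE.
  case: (ind S) (#|S| == n.+1) => [] [] /=; rewrite ?andbF //.
  apply/idP/idP => [/andP [vS /avoidP aS] | /avoidP aS].
    apply/avoidP => x xS; rewrite !inE negb_or aS // andbT.
    by apply: contraNneq vS => <-.
  apply/andP; split.
    by apply/negP => /aS; rewrite !inE eqxx.
  by apply/avoidP => x /aS; rewrite !inE negb_or => /andP [].
by [].
Qed.

Lemma Qg_count n :
  (n.+1 * Qg n.+1 set0 = \sum_v Qg n (v |: (set0 :|: Nb v)))%N.
Proof.
under eq_bigr => v _ do rewrite -Qg_mem ?inE //.
rewrite /Qg.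
set A := [set S : {set T} | ind S && (#|S| == n.+1) && avoid S set0].
have E v : #|[set S : {set T} | ind S && (#|S| == n.+1) && avoid S set0 && (v \in S)]|
   = (\sum_(S in A) (v \in S))%N.
  rewrite -sum1_card big_mkcond [RHS]big_mkcond /=; apply: eq_bigr => S _.
  by rewrite !inE; case: (v \in S); rewrite ?andbT ?andbF /=; case: ifP.
under eq_bigr => v _ do rewrite E.
rewrite exchange_big /= mulnC -sum1_card big_distrl /=.
apply: eq_bigr => S; rewrite inE => /andP [/andP [_ /eqP cS] _].
rewrite mul1n -cS -sum1_card big_mkcond; apply: eq_bigr => i _; by case: (i \in S).
Qed.

End Graph.

Lemma tf : (true == false) = false. Proof. by []. Qed.
Lemma ft : (false == true) = false. Proof. by []. Qed.
Lemma tt_ : (true == true) = true. Proof. by []. Qed.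
Lemma ff_ : (false == false) = true. Proof. by []. Qed.

Section Spec.
Variable a : seq nat.
Hypothesis apos : all (fun x => 0 < x)%N a.
Definition W := (\max_(d <- a) d)%N.

Lemma aW d : d \in a -> (d <= W)%N.
Proof. by move=> da; rewrite /W; apply: (@leq_bigmax_seq _ a xpredT id d). Qed.
Lemma a0 d : d \in a -> (0 < d)%N.
Proof. by move=> da; apply: (allP apos). Qed.

Definition Nbpat (b : bool) : seq (int * bool) :=
  if b then [:: (0%R, false)] else
  (0%R, true) :: ([seq ((d%:Z)%R, false) | d <- a] ++ [seq ((- d%:Z)%R, false) | d <- a]).
Definition nbp (ob : int * bool) := [seq ((ob.1 + c.1)%R, c.2) | c <- Nbpat ob.2].

Section Fix.
Variables (s : nat) (k : 'I_s -> nat).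
Definition ee : rel (union_vtx k) := fun x y => union_adj a x y.
Definition QQ n X := Qg ee n X.
Definition mt (i : 'I_s) (p : nat) (ob : int * bool) (x : union_vtx k) : bool :=
  (tag x == i :> 'I_s) && ((tagged x).2 == ob.2 :> bool) &&
  ((k i)%:Z %| ((val (tagged x).1)%:Z - (p%:Z + ob.1))%R)%Z.
Definition V i p (A : seq (int * bool)) : {set union_vtx k} :=
  [set x | has (fun ob => mt i p ob x) A].

Lemma ee_irr x : ~~ ee x x.
Proof. case: x => i [q b]; rewrite /ee /union_adj /Fbar_adj /= eqxx /=; case: b => //; by rewrite /F_adj eqxx. Qed.

Lemma F_adj_sym K y z : F_adj a K y z = F_adj a K z y.
Proof.
rewrite /F_adj eq_sym; congr (_ && _); apply: eq_has => r; exact: orbC.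
Qed.

Lemma ee_sym x y : ee x y = ee y x.
Proof.
case: x => i [q b]; case: y => j [z c]; rewrite /ee /union_adj /=.
case: eqP => [e | ne]; last by case: eqP => // /esym /ne.
subst j; case: eqP => // _ /=; rewrite /Fbar_adj /=.
case: b; case: c => //=; try exact: F_adj_sym; exact: eq_sym.
Qed.

Lemma V_nil i p : V i p [::] = set0.
Proof. by apply/setP => x; rewrite !inE. Qed.

Lemma V_cons i p ob A : V i p (ob :: A) = [set x | mt i p ob x] :|: V i p A.
Proof. by apply/setP => x; rewrite !inE. Qed.

Lemma V_cat i p A B : V i p (A ++ B) = V i p A :|: V i p B.
Proof. by apply/setP => x; rewrite !inE has_cat. Qed.

Lemma num_QQ n : num_indep a n k = QQ n set0.
Proof.
rewrite /num_indep /QQ /Qg; apply: eq_card => S; rewrite !inE.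
have -> : avoid S set0 = true by apply/avoidP => x; rewrite inE.
by rewrite andbT.
Qed.

Lemma mt_ex i p ob : (0 < k i)%N -> exists v, [set x | mt i p ob x] = [set v].
Proof.
move=> hk.
set r := ((p%:Z + ob.1) %% (k i)%:Z)%Z.
have r0 : (0 <= r)%R by apply: modz_ge0; rewrite eqz_nat -lt0n.
have rK : (`|r| < k i)%N.
  have : (r < (k i)%:Z)%R by apply: ltz_pmod; rewrite ltz_nat.
  lia.
have hr : ((k i)%:Z %| ((`|r|%N)%:Z - (p%:Z + ob.1))%R)%Z.
  rewrite gez0_abs // /r.
  have e := divz_eq (p%:Z + ob.1)%R (k i)%:Z.
  move: ((p%:Z + ob.1) %/ (k i)%:Z)%Z e => qq e.
  apply/dvdzP; exists (- qq)%R; rewrite {2}e; lia.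
exists (Tagged (fun j => ('I_(k j) * bool)%type) (Ordinal rK, ob.2)).
apply/setP => x; rewrite !inE; apply/idP/eqP => [|->]; last first.
  by rewrite /mt /= !eqxx.
case: x => j [z c]; rewrite /mt /= => /andP [/andP [/eqP ji /eqP cb] hz].
subst j c; rewrite (_ : z = Ordinal rK) //; apply: val_inj => /=.
apply/eqP; rewrite -(small_dvd (ltn_ord z) rK).
by rewrite -(@dvdz_eqE _ ((nat_of_ord z)%:Z - (p%:Z + ob.1))%R _ _ hr) //; lia.
Qed.

Lemma mt_dist i p ob ob' x : (`|(ob.1 - ob'.1)%R| < k i)%N ->
  mt i p ob x -> mt i p ob' x -> ob = ob'.
Proof.
case: ob ob' => o b [o' b'] /= h.
case: x => j [z c]; rewrite /mt /= => /andP [/andP [_ /eqP cb] h1] /andP [/andP [_ /eqP cb'] h2].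
subst.
have : ((k i)%:Z %| (o - o')%R)%Z.
  have := rpredB h2 h1.
  by rewrite (_ : (_ - _ = o - o')%R) //; lia.
by move/(dvdz_small h) => e; congr (_, _); lia.
Qed.

Lemma Nb_mt i p ob v : (W < k i)%N -> mt i p ob v -> Nb ee v = V i p (nbp ob).
Proof.
move=> hW; case: v => j [q b]; rewrite /mt /= => /andP [/andP [/eqP ji /eqP bb] hq].
subst j; case: ob bb hq => o b' /= bb hq; subst b'.
apply/setP => x; case: x => j [z c]; rewrite !inE ee_sym orbb /ee /union_adj /=.
case: eqP => [e | ne]; last first.
  apply/esym/hasPn => ob _; rewrite /mt /=.
  by case: eqP => // e; case: ne.
subst j => /=.
rewrite /nbp /Fbar_adj /=.
have key : forall (u : int),
    ((k i)%:Z %| ((nat_of_ord z)%:Z - (p%:Z + (o + u)))%R)%Z =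
    ((k i)%:Z %| ((nat_of_ord z)%:Z - ((nat_of_ord q)%:Z + u))%R)%Z.
  by move=> u; apply: (dvdz_eqE hq); lia.
case: b hq => hq; case: c => /=.
- by rewrite /mt /= tf andbF.
- by rewrite /mt /= orbF eqxx ff_ /= key addr0 small_dvd.
- rewrite /mt /= eqxx tt_ /= key addr0 small_dvd //.
  case: (_ == _) => //=; apply/esym/negbTE.
  rewrite map_cat has_cat !has_map negb_or; apply/andP; split;
    by apply/hasPn => d _; rewrite /=.
rewrite F_adj_sym /mt /= map_cat has_cat !has_map /F_adj /=.
rewrite ft andbF /=.
have hP : forall d, d \in a ->
  (((q + k i - z) %% k i == d %% k i)%N =
     ((k i)%:Z %| ((nat_of_ord z)%:Z - ((nat_of_ord q)%:Z + (- d%:Z)))%R)%Z) /\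
  (((z + k i - q) %% k i == d %% k i)%N =
     ((k i)%:Z %| ((nat_of_ord z)%:Z - ((nat_of_ord q)%:Z + d%:Z))%R)%Z).
  move=> d da; have dK : (d < k i)%N by have := aW da; lia.
  rewrite !modeq //; split; [apply: dvdz_eqN | apply: (dvdz_eqE (dvdz0 _))]; lia.
have qz : forall d, d \in a ->
  ((k i)%:Z %| ((nat_of_ord z)%:Z - ((nat_of_ord q)%:Z + d%:Z))%R)%Z ||
  ((k i)%:Z %| ((nat_of_ord z)%:Z - ((nat_of_ord q)%:Z + (- d%:Z)))%R)%Z -> q != z.
  move=> d da h; apply/eqP => e; subst z.
  have dK : (d < k i)%N by have := aW da; lia.
  have d0 := a0 da.
  case/orP: h => h.
    have hu : (`|((nat_of_ord q)%:Z - ((nat_of_ord q)%:Z + d%:Z))%R| < k i)%N by lia.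
    have := dvdz_small hu h; lia.
  have hu : (`|((nat_of_ord q)%:Z - ((nat_of_ord q)%:Z + (- d%:Z)))%R| < k i)%N by lia.
  have := dvdz_small hu h; lia.
apply/andP/orP => [[_ /hasP [d da]] | ].
  rewrite (proj1 (hP d da)) (proj2 (hP d da)) => /orP [h | h]; [right | left];
    apply/hasP; exists d => //=; by rewrite eqxx ff_ key.
case=> /hasP [d da]; rewrite /= eqxx ff_ /= key => h; split.
- by apply: (qz d da); rewrite h ?orbT.
- apply/hasP; exists d => //.
  by rewrite (proj1 (hP d da)) (proj2 (hP d da)) h ?orbT.
- by apply: (qz d da); rewrite h ?orbT.
- apply/hasP; exists d => //.
  by rewrite (proj1 (hP d da)) (proj2 (hP d da)) h ?orbT.
Qed.

End Fix.


Arguments QQ {s} k n X.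
Arguments ee {s} k x y.
Arguments mt {s} k i p ob x.

Definition bnd m D := (2 * (D + m * W)).+1.

Lemma coef m : forall (A : seq (int * bool)) (D : nat),
  all (fun ob => (`|ob.1| <= D)%N) A ->
  exists beta : nat -> rat, forall s (k : 'I_s -> nat),
    (forall i, (bnd m D < k i)%N) -> forall i p,
    ((QQ k m (V k i p A))%:R : rat) =
      (\sum_(j < m.+1) beta j * (QQ k (m - j)%N set0)%:R)%R.
Proof.
elim: m => [|m IHm] A D hA.
  exists (fun _ => 1%R) => s k hk i p.
  by rewrite big_ord1 sub0n /QQ !Qg0 mul1r.
elim: A hA => [|ob A IHA] hA.
  exists (fun j => if j == 0%N then 1%R else 0%R) => s k hk i p.
  by rewrite V_nil big_ord_recl /= mul1r subn0 big1 ?addr0 // => *; rewrite mul0r.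
move: hA => /= /andP [hob hA].
have [b1 Hb1] := IHA hA.
case: (boolP (ob \in A)) => obA.
  exists b1 => s k hk i p; rewrite -(Hb1 s k hk i p); congr ((_ %:R)%R); congr QQ.
  apply/setP => x; rewrite V_cons !inE; apply/orP/idP => [[h | //] | ->]; last by right.
  by apply/hasP; exists ob.
have hA2 : all (fun ob => (`|ob.1| <= D + W)%N) (ob :: nbp ob ++ A).
  rewrite /= all_cat; apply/and3P; split.
  - lia.
  - apply/allP => c /mapP [c' hc' ->] /=.
    move: hc'; rewrite /Nbpat; case: (ob.2) => /=.
      rewrite inE => /eqP -> /=; lia.
    rewrite inE mem_cat => /orP [/eqP -> /= | /orP [] /mapP [d da ->] /=];
      [lia | have := aW da; lia | have := aW da; lia].
  - by apply: sub_all hA => c /= h; lia.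
have [b2 Hb2] := IHm _ _ hA2.
exists (fun j => b1 j - (if j is j'.+1 then b2 j' else 0))%R.
move=> s k hk i p.
have hki := hk i.
have kpos : (0 < k i)%N by lia.
have [v hv] := @mt_ex _ k i p ob kpos.
have vmt : mt k i p ob v.
  have : v \in [set v] by rewrite set11.
  by rewrite -hv inE.
have vA : v \notin V k i p A.
  apply/negP; rewrite inE => /hasP [ob' ob'A h'].
  have hob' := allP hA _ ob'A.
  have e : ob = ob'.
    apply: (mt_dist _ vmt h'); rewrite /bnd in hki; move: hob hob' hki.
    rewrite /=; lia.
  by move: obA; rewrite e ob'A.
have E1 : V k i p (ob :: A) = v |: V k i p A by rewrite V_cons hv.
have hW : (W < k i)%N by rewrite /bnd in hki; lia.
have E2 : v |: (V k i p A :|: Nb (ee k) v) = V k i p (ob :: nbp ob ++ A).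
  by rewrite V_cons V_cat hv (Nb_mt hW vmt) [V k i p A :|: _]setUC.
have := Qg_split (ee_irr (k:=k)) m vA.
rewrite E2 -E1 => HQ.
have hk2 : forall i, (bnd m (D + W) < k i)%N.
  by move=> i'; have := hk i'; rewrite /bnd; lia.
rewrite /QQ.
have -> : ((Qg (ee k) m.+1 (V k i p (ob :: A)))%:R =
   (Qg (ee k) m.+1 (V k i p A))%:R - (Qg (ee k) m (V k i p (ob :: nbp ob ++ A)))%:R :> rat)%R.
  by rewrite HQ natrD addrK.
rewrite -/(QQ _ _ _) -/(QQ _ _ _) Hb1 // Hb2 //.
under eq_bigr => j _ do rewrite mulrBl.
rewrite sumrB; congr (_ - _)%R.
rewrite [RHS]big_ord_recl /= mul0r add0r; apply: eq_bigr => j _.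
by rewrite /bump /= add1n subSS /QQ.
Qed.

Lemma sum_vtx s (k : 'I_s -> nat) (f : bool -> rat) :
  (\sum_(v : union_vtx k) f (tagged v).2 = (\sum_i k i)%N%:R * (f false + f true))%R.
Proof.
rewrite (partition_big (fun v : union_vtx k => tag v) xpredT) //=.
rewrite natr_sum big_distrl /=; apply: eq_bigr => i _.
have E : (\sum_(v : union_vtx k | tag v == i) f (tagged v).2 =
   \sum_(j : ('I_(k i) * bool)%type) f j.2)%R.
  rewrite (big_tag (fun i (j : ('I_(k i) * bool)%type) => f j.2) i).
  apply: eq_big => [v | v vi]; first by [].
  rewrite (untagE _ _ (eqP vi)); case: v vi => j [q b] /= vi.
  by move: (eqP vi) => e; subst j.
rewrite E -(pair_bigA _ (fun (q : 'I_(k i)) (b : bool) => f b)) /=.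
under eq_bigr => q _ do rewrite big_bool /=.
by rewrite sumr_const card_ord mulr_natl addrC.
Qed.

Lemma main (n : nat) : exists (P : nat -> rat) (N : nat),
  forall (s : nat) (k : 'I_s -> nat), (0 < s)%N -> (forall i, (N <= k i)%N) ->
    ((num_indep a n k)%:R : rat) = P (\sum_(i < s) k i)%N.
Proof.
pose N := (bnd n W).+1.
have claim : forall m, (m <= n)%N -> exists P : nat -> nat -> rat,
    forall j, (j <= m)%N -> forall s (k : 'I_s -> nat), (forall i, (N <= k i)%N) ->
    ((QQ k j set0)%:R : rat) = P j (\sum_i k i)%N.
  elim=> [|m IH] hm.
    exists (fun _ _ => 1%R) => j; rewrite leqn0 => /eqP -> s k hk.
    by rewrite /QQ Qg0.
  have [P HP] := IH (ltnW hm).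
  have hA : forall b, all (fun ob => (`|ob.1| <= W)%N) ((0%R, b) :: nbp (0%R, b)).
    move=> b; apply/andP; split; first by []; apply/allP => c /mapP [c' hc' ->] /=.
    move: hc'; rewrite /Nbpat; case: b => /=.
      rewrite inE => /eqP -> /=; lia.
    rewrite inE mem_cat => /orP [/eqP -> /= | /orP [] /mapP [d da ->] /=];
      [lia | have := aW da; lia | have := aW da; lia].
  have [bf Hf] := coef m (hA false); have [bt Ht] := coef m (hA true).
  pose c (b : bool) K := (\sum_(j < m.+1) (if b then bt j else bf j) * P (m - j)%N K)%R.
  exists (fun j K => if j == m.+1 then (K%:R * (c false K + c true K) / (m.+1)%:R)%R
                     else P j K).
  move=> j hj s k hk /=; case: (eqVneq j m.+1) => [-> | ne]; last first.
    by apply: HP => //; move: hj ne; lia.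

  have hb : forall i, (bnd m W < k i)%N.
    move=> i; have := hk i; rewrite /N /bnd; nia.
  have hW : forall i, (W < k i)%N by move=> i; have := hb i; rewrite /bnd; lia.
  have key : forall v : union_vtx k,
      ((QQ k m (v |: (set0 :|: Nb (ee k) v)))%:R : rat) = c (tagged v).2 (\sum_i k i)%N.
    move=> v.
    have vmt : mt k (tag v) (val (tagged v).1) (0%R, (tagged v).2) v.
      case: v => i [q b]; rewrite /mt /= eqxx addr0 subrr dvdz0 andbT.
      by case: b.
    have [v' hv'] := @mt_ex _ k (tag v) (val (tagged v).1) (0%R, (tagged v).2)
                       (leq_ltn_trans (leq0n _) (hW _)).
    have vv' : v = v'.
      apply/set1P; rewrite -hv' inE; exact: vmt.
    rewrite set0U (Nb_mt (hW _) vmt) -vv' in hv' *.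
    rewrite -hv' -V_cons.
    have := (if (tagged v).2 as b return
       (forall s (k : 'I_s -> nat), (forall i, (bnd m W < k i)%N) -> forall i p,
        ((QQ k m (V k i p ((0%R, b) :: nbp (0%R, b))))%:R : rat) =
      (\sum_(jj < m.+1) (if b then bt jj else bf jj) * (QQ k (m - jj)%N set0)%:R)%R)
      then Ht else Hf) s k hb (tag v) (val (tagged v).1).
    move=> ->; rewrite /c; apply: eq_bigr => jj _.
    by rewrite (HP (m - jj)%N _ s k hk) // leq_subr.
  have := Qg_count (ee_irr (k:=k)) m.
  move/(congr1 (fun x : nat => (x%:R : rat))); rewrite natrM natr_sum.
  under eq_bigr => v _ do rewrite -/(QQ k m _) key.
  rewrite (@sum_vtx s k (fun b => c b (\sum_i k i)%N)) => h.
  by rewrite /QQ -h mulrAC mulfV ?mul1r // pnatr_eq0.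
have [P HP] := claim n (leqnn n).
exists (P n), N => s k _ hk.
by rewrite num_QQ; apply: HP.
Qed.
End Spec.

Theorem corollary3p6 (a : seq nat) (n : nat) :
  uniq a -> all (fun x => 0 < x) a ->
  exists (P : nat -> rat) (N : nat),
    forall (s : nat) (k : 'I_s -> nat),
      0 < s -> (forall i, N <= k i) ->
      ((num_indep a n k)%:R : rat) = P (\sum_(i < s) k i)%N.
Proof.
move=> _ apos; exact: (main apos n).
Qed.
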